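(* Let $b$ be a real number with $|b|>1$, let $r$ be a nonnegative integer, and let $(b_n)_{n\ge1}$ be a real sequence with $b_n\to b$. Then $$\lim_{n\to\infty}\frac1n\,{}_4F_3\!\left[\begin{matrix}1,\ n+\frac12,\ 1-n,\ b_nn+r\\ n+1,\ \frac32-n,\ b_nn+r+1\end{matrix};1\right]=\frac{2b}{b+1}\sqrt{\frac{b+1}{b-1}}\arctan\Big(\sqrt{\frac{b-1}{b+1}}\Big).$$
   Context: ${}_pF_q\left[\begin{matrix}a_1,\dots,a_p\\ b_1,\dots,b_q\end{matrix};z\right]=\sum_{k\ge0}\frac{(a_1)_k\cdots(a_p)_k}{(b_1)_k\cdots(b_q)_k}\frac{z^k}{k!}$ with $(a)_k=a(a+1)\cdots(a+k-1)$, $(a)_0=1$; here the series terminates because of the numerator parameter $1-n$, i.e. it is the finite sum over $0\le k\le n-1$. *)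

(* Defs.v *)
From Stdlib Require Import Reals List Arith Factorial.
Open Scope R_scope.

Fixpoint poch (a : R) (k : nat) : R :=
  match k with
  | O => 1
  | S k' => poch a k' * (a + INR k')
  end.

Definition F43_trunc (a1 a2 a3 a4 b1 b2 b3 z : R) (N : nat) : R :=
  fold_right Rplus 0
    (map (fun k => poch a1 k * poch a2 k * poch a3 k * poch a4 k
                   / (poch b1 k * poch b2 k * poch b3 k)
                   * z ^ k / INR (fact k))
         (seq 0 N)).

(* Main.v *)
Require Import Defs.
From Stdlib Require Import Reals Lra Lia Psatz List Arith.
Import ListNotations.
Open Scope R_scope.


Fixpoint sumk (f : nat -> R) (k : nat) : R :=
  match k with O => 0 | S k' => sumk f k' + f k' end.

Lemma fold_plus_shift (l : list R) (a : R) :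
  fold_right Rplus a l = a + fold_right Rplus 0 l.
Proof. induction l; simpl; [lra| rewrite IHl; lra]. Qed.

Lemma fold_sumk (f : nat -> R) (N : nat) :
  fold_right Rplus 0 (map f (seq 0 N)) = sumk f N.
Proof.
  induction N; [reflexivity|].
  rewrite seq_S, map_app, fold_right_app; simpl.
  rewrite fold_plus_shift, IHN. lra.
Qed.

Lemma poch_nz (a : R) (k : nat) :
  (forall j, (j < k)%nat -> a + INR j <> 0) -> poch a k <> 0.
Proof.
  induction k; intros H; simpl; [lra|].
  apply Rmult_integral_contrapositive; split.
  - apply IHk; intros j Hj; apply H; lia.
  - apply H; lia.
Qed.

Lemma half_nz (n j : nat) : 3/2 - INR n + INR j <> 0.
Proof.
  intro E. assert (E2 : INR (2*n) = INR (2*j+3)).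
  { rewrite mult_INR, plus_INR, mult_INR. simpl. lra. }
  apply INR_eq in E2. lia.
Qed.

Fixpoint w (m : nat) : R :=
  match m with O => 1 | S m' => w m' * (2 * INR m' + 1) / (2 * INR m' + 2) end.

Lemma w_pos m : 0 < w m.
Proof.
  induction m; simpl; [lra|].
  pose proof (pos_INR m).
  apply Rdiv_lt_0_compat; [apply Rmult_lt_0_compat|]; lra.
Qed.

Definition T (n : nat) (c : R) (k : nat) : R :=
  poch 1 k * poch (INR n + /2) k * poch (1 - INR n) k * poch c k
  / (poch (INR n + 1) k * poch (3/2 - INR n) k * poch (c + 1) k)
  * 1 ^ k / INR (fact k).

Definition A (n k : nat) : R := w (n + k) * w (n - 1 - k) / (w n * w (n - 1)).

Lemma T_A (c : R) (k m : nat) :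
  (forall j, (j <= k)%nat -> c + INR j <> 0) ->
  T (m + k + 1) c k = A (m + k + 1) k * (c / (c + INR k)).
Proof.
  revert m. induction k as [|k IH]; intros m Hc.
  - unfold T, A. simpl. rewrite !Nat.add_0_r, !Nat.sub_0_r.
    assert (c + 0 <> 0) by (apply (Hc 0%nat); lia).
    pose proof (w_pos (m+1)); pose proof (w_pos (m+1-1)). field; repeat split; lra.
  - set (n := (m + S k + 1)%nat).
    assert (En : n = (S m + k + 1)%nat) by (unfold n; lia).
    assert (HT : T n c (S k) = T n c k *
      ((1 + INR k) * (INR n + /2 + INR k) * (1 - INR n + INR k) * (c + INR k)
       / ((INR n + 1 + INR k) * (3/2 - INR n + INR k) * (c + 1 + INR k)) / INR (S k))).
    { unfold T. cbn [poch]. rewrite fact_simpl, mult_INR.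
      assert (H1 : poch (INR n + 1) k <> 0).
      { apply poch_nz. intros j _. pose proof (pos_INR n); pose proof (pos_INR j); lra. }
      assert (H2 : poch (3/2 - INR n) k <> 0).
      { apply poch_nz. intros j _. apply half_nz. }
      assert (H3 : poch (c+1) k <> 0).
      { apply poch_nz. intros j Hj. replace (c+1+INR j) with (c + INR (S j)) by (rewrite S_INR; lra).
        apply Hc; lia. }
      assert (H4 : INR (fact k) <> 0) by (apply not_0_INR, fact_neq_0).
      assert (H5 : INR (S k) <> 0) by (apply not_0_INR; lia).
      assert (H6 : INR n + 1 + INR k <> 0) by (pose proof (pos_INR n); pose proof (pos_INR k); lra).
      assert (H7 := half_nz n k).
      assert (H8 : c + 1 + INR k <> 0).
      { replace (c+1+INR k) with (c + INR (S k)) by (rewrite S_INR; lra). apply Hc; lia. }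
      simpl pow. field. repeat split; auto. lra. }
    rewrite HT, En, IH by (intros j Hj; apply Hc; lia).
    unfold A.
    replace (S m + k + 1 + S k)%nat with (S (S m + k + 1 + k)) by lia.
    replace (S m + k + 1 - 1 - k)%nat with (S m) by lia.
    replace (S m + k + 1 - 1 - S k)%nat with m by lia.
    cbn [w].
    assert (Hck : c + INR k <> 0) by (apply Hc; lia).
    assert (Hck1 : c + INR (S k) <> 0) by (apply Hc; lia).
    rewrite S_INR in Hck1 |- *. rewrite !plus_INR, !S_INR. simpl INR.
    pose proof (w_pos (S m + k + 1 + k)); pose proof (w_pos m);
    pose proof (w_pos (S m + k + 1)); pose proof (w_pos (S m + k + 1 - 1)).
    pose proof (pos_INR m); pose proof (pos_INR k).
    field. repeat split; lra.

Qed.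


Lemma w_S m : w (S m) = w m * ((2 * INR m + 1) / (2 * INR m + 2)).
Proof. simpl. unfold Rdiv. ring. Qed.

Lemma QI1 m : INR m * w m ^ 2 <= INR (S m) * w (S m) ^ 2.
Proof.
  rewrite w_S, S_INR. pose proof (pos_INR m). pose proof (w_pos m).
  set (x := INR m) in *. set (v := w m) in *.
  set (r := (2 * x + 1) / (2 * x + 2)).
  assert (Hr : r * (2 * x + 2) = 2 * x + 1) by (unfold r; field; lra).
  assert (0 < r) by (unfold r; apply Rdiv_lt_0_compat; lra).
  assert (E : 4 * (x+1) * ((x+1) * r^2 - x) = 1).
  { replace (4 * (x+1) * ((x+1) * r^2 - x)) with ((r * (2*x+2))^2 - 4*x*(x+1)) by ring.
    rewrite Hr. ring. }
  assert (0 <= (x+1) * r^2 - x).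
  { destruct (Rle_lt_dec 0 ((x+1) * r^2 - x)); auto. nra. }
  nra.
Qed.

Lemma QD1 m : (INR (S m) + /2) * w (S m) ^ 2 <= (INR m + /2) * w m ^ 2.
Proof.
  rewrite w_S, S_INR. pose proof (pos_INR m). pose proof (w_pos m).
  set (x := INR m) in *. set (v := w m) in *.
  set (r := (2 * x + 1) / (2 * x + 2)).
  assert (Hr : r * (2 * x + 2) = 2 * x + 1) by (unfold r; field; lra).
  assert (0 < r) by (unfold r; apply Rdiv_lt_0_compat; lra).
  assert (r <= 1) by nra.
  assert ((x + 1 + /2) * r^2 <= x + /2).
  { assert (E : 2 * (2*x+2)^2 * ((x + 1 + /2) * r^2) = (2*x+3)*(2*x+1)^2).
    { replace (2 * (2*x+2)^2 * ((x + 1 + /2) * r^2)) with ((2*x+3) * (r*(2*x+2))^2) by field.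
      rewrite Hr. ring. }
    nra. }
  nra.
Qed.

Lemma QI p q : (p <= q)%nat -> INR p * w p ^ 2 <= INR q * w q ^ 2.
Proof.
  induction 1; [lra|]. eapply Rle_trans; [apply IHle| apply QI1].
Qed.

Lemma QD p q : (p <= q)%nat -> (INR q + /2) * w q ^ 2 <= (INR p + /2) * w p ^ 2.
Proof.
  induction 1; [lra|]. eapply Rle_trans; [apply QD1| apply IHle].
Qed.


Lemma le_div (a b d : R) : 0 < d -> a * d <= b -> a <= b / d.
Proof. intros Hd H. apply Rmult_le_reg_r with d; auto. unfold Rdiv. rewrite Rmult_assoc, Rinv_l; lra. Qed.
Lemma div_le (a b d : R) : 0 < d -> a <= b * d -> a / d <= b.
Proof. intros Hd H. apply Rmult_le_reg_r with d; auto. unfold Rdiv. rewrite Rmult_assoc, Rinv_l; lra. Qed.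

Lemma A_pos n k : 0 < A n k.
Proof.
  unfold A. pose proof (w_pos (n+k)); pose proof (w_pos (n-1-k));
  pose proof (w_pos n); pose proof (w_pos (n-1)).
  apply Rdiv_lt_0_compat; apply Rmult_lt_0_compat; auto.
Qed.

Lemma A_sq n k : A n k ^ 2 = (w (n+k) ^2 * w (n-1-k) ^2) / (w n ^ 2 * w (n-1) ^2).
Proof.
  unfold A. pose proof (w_pos n); pose proof (w_pos (n-1)). field. lra.
Qed.

Lemma A_lower n k : (k < n)%nat ->
  INR n * (INR n - /2) <= A n k ^2 * ((INR n + INR k) * (INR n - INR k - /2)).
Proof.
  intros Hk. rewrite A_sq.
  pose proof (QI n (n+k) ltac:(lia)) as h1.
  pose proof (QD (n-1-k) (n-1) ltac:(lia)) as h2.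
  rewrite plus_INR in h1. rewrite !minus_INR in h2 by lia. simpl INR in h2.
  pose proof (w_pos (n+k)); pose proof (w_pos (n-1-k));
  pose proof (w_pos n); pose proof (w_pos (n-1)).
  assert (HkR : INR k + 1 <= INR n) by (rewrite <- S_INR; apply le_INR; lia).
  pose proof (pos_INR k).
  set (X := w (n+k)^2) in *. set (Y := w (n-1-k)^2) in *.
  set (Z := w n ^2) in *. set (V := w (n-1) ^2) in *.
  assert (0 < Z) by (unfold Z; nra). assert (0 < V) by (unfold V; nra).
  assert (0 < X) by (unfold X; nra). assert (0 < Y) by (unfold Y; nra).
  replace (X * Y / (Z * V) * ((INR n + INR k) * (INR n - INR k - / 2)))
    with (((INR n + INR k) * X) * ((INR n - INR k - /2) * Y) / (Z * V)) by (field; lra).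
  apply le_div; [nra|].
  replace (INR n * (INR n - / 2) * (Z * V)) with ((INR n * Z) * ((INR n - /2) * V)) by ring.
  apply Rmult_le_compat; try nra.
Qed.

Lemma A_upper n k : (k + 2 <= n)%nat ->
  A n k ^2 * ((INR n + INR k + /2) * (INR n - INR k - 1)) <= (INR n + /2) * (INR n - 1).
Proof.
  intros Hk. rewrite A_sq.
  pose proof (QD n (n+k) ltac:(lia)) as h1.
  pose proof (QI (n-1-k) (n-1) ltac:(lia)) as h2.
  rewrite plus_INR in h1. rewrite !minus_INR in h2 by lia. simpl INR in h2.
  pose proof (w_pos (n+k)); pose proof (w_pos (n-1-k));
  pose proof (w_pos n); pose proof (w_pos (n-1)).
  assert (HkR : INR k + 2 <= INR n) by (replace 2 with (INR 2) by (simpl; lra); rewrite <- plus_INR; apply le_INR; lia).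
  pose proof (pos_INR k).
  set (X := w (n+k)^2) in *. set (Y := w (n-1-k)^2) in *.
  set (Z := w n ^2) in *. set (V := w (n-1) ^2) in *.
  assert (0 < Z) by (unfold Z; nra). assert (0 < V) by (unfold V; nra).
  assert (0 < X) by (unfold X; nra). assert (0 < Y) by (unfold Y; nra).
  replace (X * Y / (Z * V) * ((INR n + INR k + / 2) * (INR n - INR k - 1)))
    with (((INR n + INR k + /2) * X) * ((INR n - INR k - 1) * Y) / (Z * V)) by (field; lra).
  apply div_le; [nra|].
  replace ((INR n + / 2) * (INR n - 1) * (Z * V)) with (((INR n + /2) * Z) * ((INR n - 1) * V)) by ring.
  apply Rmult_le_compat; try nra.
Qed.

Lemma A_last n : (2 <= n)%nat -> A n (n-1) ^2 <= 4 * (INR n - 1).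
Proof.
  intros Hn. rewrite A_sq.
  replace (n - 1 - (n - 1))%nat with 0%nat by lia.
  pose proof (QD n (n + (n-1)) ltac:(lia)) as h1.
  pose proof (QI 1 (n-1) ltac:(lia)) as h2.
  rewrite plus_INR, minus_INR in h1 by lia. rewrite minus_INR in h2 by lia.
  simpl INR in h1, h2. simpl w in h2 |- *.
  pose proof (w_pos (n+(n-1))); pose proof (w_pos n); pose proof (w_pos (n-1)).
  assert (HnR : 2 <= INR n) by (replace 2 with (INR 2) by (simpl; lra); apply le_INR; lia).
  set (X := w (n+(n-1))^2) in *. set (Z := w n ^2) in *. set (V := w (n-1) ^2) in *.
  assert (0 < Z) by (unfold Z; nra). assert (0 < V) by (unfold V; nra).
  assert (0 < X) by (unfold X; nra).
  assert (X <= Z) by nra.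
  assert (1 <= 4 * (INR n - 1) * V) by nra.
  apply div_le; [nra|]. nra.
Qed.


Lemma sin_lip a b : Rabs (sin a - sin b) <= Rabs (a - b).
Proof.
  destruct (Rtotal_order a b) as [H|[H|H]].
  - destruct (MVT_cor2 sin cos a b H (fun c _ => derivable_pt_lim_sin c)) as [c [Hc _]].
    rewrite <- Rabs_Ropp, Ropp_minus_distr, Hc, <- (Rabs_Ropp (a-b)), Ropp_minus_distr.
    rewrite Rabs_mult. pose proof (COS_bound c). pose proof (Rabs_pos (b-a)).
    assert (Rabs (cos c) <= 1) by (apply Rabs_le; lra). nra.
  - subst. rewrite !Rminus_diag, Rabs_R0. lra.
  - destruct (MVT_cor2 sin cos b a H (fun c _ => derivable_pt_lim_sin c)) as [c [Hc _]].
    rewrite Hc, Rabs_mult. pose proof (COS_bound c). pose proof (Rabs_pos (a-b)).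
    assert (Rabs (cos c) <= 1) by (apply Rabs_le; lra). nra.
Qed.

Lemma sin_mvt a b : 0 <= a -> a < b -> b <= PI/2 ->
  cos b * (b - a) <= sin b - sin a <= cos a * (b - a).
Proof.
  intros Ha Hab Hb. pose proof PI_RGT_0.
  destruct (MVT_cor2 sin cos a b Hab (fun c _ => derivable_pt_lim_sin c)) as [c [Hc [H1 H2]]].
  rewrite Hc.
  pose proof (cos_decreasing_1 c b ltac:(lra) ltac:(lra) ltac:(lra) ltac:(lra) H2).
  pose proof (cos_decreasing_1 a c ltac:(lra) ltac:(lra) ltac:(lra) ltac:(lra) H1).
  split; nra.
Qed.

Lemma asin_nonneg x : 0 <= x <= 1 -> 0 <= asin x <= PI/2.
Proof.
  intros Hx. pose proof (asin_bound x). split; [|lra].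
  destruct (Rle_lt_dec 0 (asin x)); auto.
  pose proof PI_RGT_0.
  pose proof (sin_lt_0_var (asin x) ltac:(lra) r). rewrite sin_asin in H1; lra.
Qed.

Definition xx (n k : nat) : R := INR k / INR n.
Definition th (n k : nat) : R := asin (xx n k).

Lemma INR_pos_of n : (1 <= n)%nat -> 1 <= INR n.
Proof. intros; replace 1 with (INR 1) by reflexivity; apply le_INR; auto. Qed.

Lemma xx_range n k : (1 <= n)%nat -> (k <= n)%nat -> 0 <= xx n k <= 1.
Proof.
  intros Hn Hk. unfold xx. pose proof (INR_pos_of n Hn). pose proof (pos_INR k).
  apply le_INR in Hk. split.
  - unfold Rdiv; apply Rmult_le_pos; [lra| left; apply Rinv_0_lt_compat; lra].
  - apply div_le; lra.
Qed.

Lemma xx_S n k : (1 <= n)%nat -> xx n (S k) = xx n k + / INR n.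
Proof. intros Hn. unfold xx. rewrite S_INR. pose proof (INR_pos_of n Hn). field. lra. Qed.

Lemma th_range n k : (1 <= n)%nat -> (k <= n)%nat -> 0 <= th n k <= PI/2.
Proof. intros. apply asin_nonneg, xx_range; auto. Qed.

Lemma sin_th n k : (1 <= n)%nat -> (k <= n)%nat -> sin (th n k) = xx n k.
Proof. intros. unfold th. apply sin_asin. pose proof (xx_range n k H H0). lra. Qed.

Lemma cos2_th n k : (1 <= n)%nat -> (k <= n)%nat -> cos (th n k) ^ 2 = 1 - xx n k ^ 2.
Proof.
  intros. rewrite <- (sin_th n k) by auto. pose proof (sin2_cos2 (th n k)).
  unfold Rsqr in H1. nra.
Qed.

Lemma th_0 n : th n 0 = 0.
Proof. unfold th, xx. simpl. unfold Rdiv. rewrite Rmult_0_l. apply asin_0. Qed.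

Lemma th_n n : (1 <= n)%nat -> th n n = PI/2.
Proof. intros. unfold th, xx. pose proof (INR_pos_of n H). rewrite Rdiv_diag by (intro; lra). apply asin_1. Qed.

Lemma th_lt n k : (1 <= n)%nat -> (S k <= n)%nat -> th n k < th n (S k).
Proof.
  intros Hn Hk.
  destruct (Rlt_le_dec (th n k) (th n (S k))) as [|H]; auto.
  pose proof (th_range n k Hn ltac:(lia)); pose proof (th_range n (S k) Hn Hk).
  pose proof (sin_incr_1 (th n (S k)) (th n k) ltac:(lra) ltac:(lra) ltac:(lra) ltac:(lra) H).
  rewrite !sin_th, xx_S in H2 by (auto; lia).
  pose proof (INR_pos_of n Hn). assert (0 < / INR n) by (apply Rinv_0_lt_compat; lra). lra.
Qed.

Lemma th_incr n k : (1 <= n)%nat -> (S k <= n)%nat ->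
  cos (th n (S k)) * (th n (S k) - th n k) <= / INR n <=
  cos (th n k) * (th n (S k) - th n k).
Proof.
  intros Hn Hk.
  pose proof (th_range n k Hn ltac:(lia)); pose proof (th_range n (S k) Hn Hk).
  pose proof (th_lt n k Hn Hk).
  pose proof (sin_mvt (th n k) (th n (S k)) ltac:(lra) H1 ltac:(lra)).
  rewrite !sin_th, xx_S in H2 by (auto; lia). lra.
Qed.


Definition u (n k : nat) : R := A n k / INR n.
Definition cn (n : nat) : R := sqrt (1 - / (2 * INR n)).

Lemma sq_le a b : 0 <= b -> a ^ 2 <= b ^ 2 -> a <= b.
Proof. intros. nra. Qed.

Lemma INR2 n : (2 <= n)%nat -> 2 <= INR n.
Proof. intros; replace 2 with (INR 2) by (simpl; lra); apply le_INR; auto. Qed.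

Lemma cn_facts n : (2 <= n)%nat -> 0 <= cn n <= 1 /\ cn n ^ 2 = 1 - / (2 * INR n)
   /\ 1 - cn n <= / (2 * INR n).
Proof.
  intros Hn. pose proof (INR2 n Hn).
  assert (0 < / (2 * INR n) <= /4).
  { split. apply Rinv_0_lt_compat; lra. apply Rinv_le_contravar; lra. }
  assert (Hs : cn n ^ 2 = 1 - / (2 * INR n)).
  { unfold cn. simpl. rewrite Rmult_1_r. apply sqrt_sqrt. lra. }
  assert (0 <= cn n) by (unfold cn; apply sqrt_pos).
  split; [split; nra|]. split; auto. nra.
Qed.

Lemma u_pos n k : (2 <= n)%nat -> 0 < u n k.
Proof. intros. unfold u. pose proof (A_pos n k). pose proof (INR2 n H). apply Rdiv_lt_0_compat; lra. Qed.

Lemma u_lower n j : (2 <= n)%nat -> (S j < n)%nat ->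
  cn n * (th n (S j) - th n j) <= u n (S j).
Proof.
  intros Hn Hj. pose proof (INR2 n Hn) as HnR.
  destruct (cn_facts n Hn) as [Hc1 [Hc2 Hc3]].
  pose proof (th_incr n j ltac:(lia) ltac:(lia)) as [D1 _].
  pose proof (th_lt n j ltac:(lia) ltac:(lia)) as Hlt.
  pose proof (cos2_th n (S j) ltac:(lia) ltac:(lia)) as Hc.
  pose proof (th_range n (S j) ltac:(lia) ltac:(lia)).
  pose proof (cos_ge_0 (th n (S j)) ltac:(lra) ltac:(lra)) as Hcp.
  pose proof (A_lower n (S j) Hj) as HA.
  pose proof (A_pos n (S j)).
  assert (HK : INR (S j) + 1 <= INR n) by (rewrite <- S_INR; apply le_INR; lia).
  pose proof (pos_INR (S j)).
  unfold xx in Hc. unfold u.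
  set (K := INR (S j)) in *. set (N := INR n) in *.
  set (C := cos (th n (S j))) in *. set (D := th n (S j) - th n j) in *.
  set (a := A n (S j)) in *.
  assert (HD : 0 < D) by (unfold D; lra).
  assert (E1 : (N^2 - K^2) * D^2 <= 1).
  { assert (C * D * N <= 1).
    { apply Rmult_le_reg_r with (/N). apply Rinv_0_lt_compat; lra.
      rewrite Rmult_assoc, Rinv_r, Rmult_1_r by lra. lra. }
    assert (C^2 * N^2 = N^2 - K^2) by (rewrite Hc; field; lra).
    assert (0 <= C * D * N) by (apply Rmult_le_pos; [apply Rmult_le_pos|]; lra).
    replace ((N^2 - K^2) * D^2) with ((C * D * N)^2) by (rewrite <- H3; ring). nra. }
  assert (E2 : N * (N - /2) <= a^2 * (N^2 - K^2)).
  { eapply Rle_trans; [exact HA|]. apply Rmult_le_compat_l; [nra|]. nra. }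
  assert (E3 : N * (N - /2) * D^2 <= a^2).
  { apply Rle_trans with (a^2 * (N^2-K^2) * D^2).
    - apply Rmult_le_compat_r; nra.
    - replace (a^2 * (N^2-K^2) * D^2) with (a^2 * ((N^2-K^2) * D^2)) by ring.
      replace (a^2) with (a^2 * 1) at 2 by ring. apply Rmult_le_compat_l; nra. }
  apply sq_le. left; apply Rdiv_lt_0_compat; lra.
  replace ((cn n * D)^2) with (cn n ^2 * D^2) by ring. rewrite Hc2.
  replace ((a / N)^2) with (a^2 / N^2) by (field; lra).
  replace ((1 - / (2 * N)) * D^2) with (N * (N - /2) * D^2 / N^2) by (field; lra).
  apply Rmult_le_compat_r; [apply Rlt_le, Rinv_0_lt_compat; nra| exact E3].
Qed.

Lemma u_upper n k : (2 <= n)%nat -> (k + 2 <= n)%nat ->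
  u n k <= th n (S (S k)) - th n (S k).
Proof.
  intros Hn Hk. pose proof (INR2 n Hn) as HnR.
  pose proof (th_incr n (S k) ltac:(lia) ltac:(lia)) as [_ D2].
  pose proof (th_lt n (S k) ltac:(lia) ltac:(lia)) as Hlt.
  pose proof (cos2_th n (S k) ltac:(lia) ltac:(lia)) as Hc.
  pose proof (th_range n (S k) ltac:(lia) ltac:(lia)).
  pose proof (cos_ge_0 (th n (S k)) ltac:(lra) ltac:(lra)) as Hcp.
  pose proof (A_upper n k Hk) as HA.
  pose proof (A_pos n k).
  assert (HK : INR k + 2 <= INR n) by (replace 2 with (INR 2) by (simpl; lra); rewrite <- plus_INR; apply le_INR; lia).
  pose proof (pos_INR k).
  unfold xx in Hc. unfold u. rewrite S_INR in Hc.
  set (K := INR k) in *. set (N := INR n) in *.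
  set (C := cos (th n (S k))) in *. set (D := th n (S (S k)) - th n (S k)) in *.
  set (a := A n k) in *.
  assert (HD : 0 < D) by (unfold D; lra).
  assert (E1 : 1 <= (N^2 - (K+1)^2) * D^2).
  { assert (1 <= C * D * N).
    { apply Rmult_le_reg_r with (/N). apply Rinv_0_lt_compat; lra.
      rewrite Rmult_assoc, Rinv_r, Rmult_1_l by lra. lra. }
    assert (C^2 * N^2 = N^2 - (K+1)^2) by (rewrite Hc; field; lra).
    replace ((N^2 - (K+1)^2) * D^2) with ((C * D * N)^2) by (rewrite <- H3; ring). nra. }
  assert (E2 : a^2 * (N^2 - (K+1)^2) <= N^2).
  { set (P := a^2 * (N - K - 1)).
    assert (0 <= P) by (unfold P; nra).
    assert (P * (N + K + /2) <= (N + /2) * (N - 1)) by (unfold P; nra).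
    replace (a^2 * (N^2 - (K+1)^2)) with (P * (N + K + 1)) by (unfold P; ring).
    apply Rmult_le_reg_r with (N + K + /2); [lra|].
    apply Rle_trans with ((N + /2) * (N - 1) * (N + K + 1)); nra. }
  apply sq_le; [lra|].
  replace ((a / N)^2) with (a^2 / N^2) by (field; lra).
  apply div_le; [nra|].
  assert (0 < N^2 - (K+1)^2) by nra.
  apply Rmult_le_reg_r with (N^2 - (K+1)^2); [lra|]. nra.
Qed.

Lemma u_sq_small n k : (2 <= n)%nat -> (k < n)%nat -> u n k ^ 2 <= 4 / INR n.
Proof.
  intros Hn Hk. pose proof (INR2 n Hn) as HnR. pose proof (A_pos n k).
  unfold u. replace ((A n k / INR n)^2) with (A n k ^2 / INR n ^2) by (field; lra).
  destruct (Nat.eq_dec k (n-1)) as [->|Hk'].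
  - pose proof (A_last n Hn). apply div_le; [nra|].
    replace (4 / INR n * INR n ^ 2) with (4 * INR n) by (field; lra). lra.
  - pose proof (A_upper n k ltac:(lia)) as HA.
    assert (HK : INR k + 2 <= INR n) by (replace 2 with (INR 2) by (simpl; lra); rewrite <- plus_INR; apply le_INR; lia).
    pose proof (pos_INR k).
    apply div_le; [nra|].
    replace (4 / INR n * INR n ^ 2) with (4 * INR n) by (field; lra).
    set (a := A n k) in *. set (K := INR k) in *. set (N := INR n) in *.
    assert (a^2 * (N + /2) <= a^2 * ((N + K + /2) * (N - K - 1))).
    { apply Rmult_le_compat_l; nra. }
    nra.
Qed.


Definition U (n k : nat) : R := sumk (u n) k.

Lemma U_upper n k : (2 <= n)%nat -> (k <= n - 1)%nat -> U n k <= th n (S k).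
Proof.
  intros Hn. induction k; intros Hk.
  - unfold U; simpl. apply (th_range n 1); lia.
  - unfold U in *; simpl. pose proof (u_upper n k Hn ltac:(lia)). specialize (IHk ltac:(lia)). lra.
Qed.

Lemma U_lower n j : (2 <= n)%nat -> (S j <= n)%nat -> cn n * th n j <= U n (S j).
Proof.
  intros Hn. induction j; intros Hj.
  - rewrite th_0. unfold U; simpl. pose proof (u_pos n 0 Hn). lra.
  - unfold U in *. change (sumk (u n) (S (S j))) with (sumk (u n) (S j) + u n (S j)).
    pose proof (u_lower n j Hn ltac:(lia)). specialize (IHj ltac:(lia)). lra.
Qed.

Lemma U_nonneg n k : (2 <= n)%nat -> 0 <= U n k.
Proof.
  intros Hn. induction k; unfold U in *; simpl; [lra|]. pose proof (u_pos n k Hn). lra.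
Qed.

Lemma U_last n : (2 <= n)%nat -> U n n <= PI/2 + u n (n-1).
Proof.
  intros Hn. replace n with (S (n-1)) at 2 by lia. unfold U. simpl.
  pose proof (U_upper n (n-1) Hn ltac:(lia)). unfold U in H.
  replace (S (n-1)) with n in H by lia. rewrite th_n in H by lia. lra.
Qed.

Lemma sinU n k : (2 <= n)%nat -> (k <= n - 1)%nat ->
  Rabs (sin (U n k) - xx n k) <= / INR n + 2 * (1 - cn n).
Proof.
  intros Hn Hk. pose proof (INR2 n Hn) as HnR.
  destruct (cn_facts n Hn) as [Hc1 [Hc2 Hc3]].
  assert (0 < / INR n) by (apply Rinv_0_lt_compat; lra).
  destruct k as [|j].
  - unfold U, xx. simpl. rewrite sin_0. unfold Rdiv. rewrite Rmult_0_l, Rminus_0_r, Rabs_R0. lra.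
  - pose proof (U_upper n (S j) Hn Hk) as Hup.
    pose proof (U_lower n j Hn ltac:(lia)) as Hlo.
    pose proof (th_range n j ltac:(lia) ltac:(lia)).
    pose proof (th_range n (S (S j)) ltac:(lia) ltac:(lia)).
    pose proof PI_RGT_0. pose proof PI_4.
    assert (Hs1 : sin (U n (S j)) <= xx n (S j) + / INR n).
    { rewrite <- xx_S, <- sin_th by lia. apply sin_incr_1; nra. }
    assert (Hs2 : sin (cn n * th n j) <= sin (U n (S j))).
    { apply sin_incr_1; nra. }
    pose proof (sin_lip (cn n * th n j) (th n j)) as Hs3.
    rewrite sin_th in Hs3 by lia.
    rewrite (Rabs_left1 (cn n * th n j - th n j)) in Hs3 by nra.
    rewrite xx_S in Hs1 |- * by lia.
    apply Rabs_le. split; [|lra].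
    assert ((1 - cn n) * th n j <= 2 * (1 - cn n)) by nra.
    pose proof (Rle_abs (-(sin (cn n * th n j) - xx n j))) as Hab. rewrite Rabs_Ropp in Hab. nra.
Qed.

From Coquelicot Require Import Coquelicot.
Open Scope R_scope.

Lemma atan_sub a c : 0 < 1 + a * c -> atan a - atan c = atan ((a - c) / (1 + a * c)).
Proof.
  intros H. pose proof (atan_bound a); pose proof (atan_bound c).
  set (al := atan a) in *. set (ga := atan c) in *.
  assert (Ca : 0 < cos al) by (apply cos_gt_0; lra).
  assert (Cg : 0 < cos ga) by (apply cos_gt_0; lra).
  assert (Ta : tan al = a) by apply tan_atan.
  assert (Tg : tan ga = c) by apply tan_atan.
  assert (Sa : sin al = a * cos al) by (rewrite <- Ta; unfold tan; field; lra).
  assert (Sg : sin ga = c * cos ga) by (rewrite <- Tg; unfold tan; field; lra).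
  assert (Cd : 0 < cos (al - ga)).
  { rewrite cos_minus, Sa, Sg.
    replace (cos al * cos ga + a * cos al * (c * cos ga)) with (cos al * cos ga * (1 + a*c)) by ring.
    apply Rmult_lt_0_compat; [apply Rmult_lt_0_compat|]; lra. }
  pose proof PI_RGT_0.
  assert (Hd : - (PI/2) < al - ga < PI/2).
  { split.
    - destruct (Rlt_le_dec (- (PI/2)) (al - ga)) as [|Hle]; auto.
      rewrite <- cos_neg in Cd.
      pose proof (cos_le_0 (- (al - ga)) ltac:(lra) ltac:(lra)). lra.
    - destruct (Rlt_le_dec (al - ga) (PI/2)) as [|Hle]; auto.
      pose proof (cos_le_0 (al - ga) ltac:(lra) ltac:(lra)). lra. }
  rewrite <- (atan_tan (al - ga) Hd). f_equal.
  rewrite tan_minus; try lra. rewrite Ta, Tg. reflexivity.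
  rewrite Ta, Tg. lra.
Qed.

Lemma b_cases b : 1 < Rabs b -> b < -1 \/ 1 < b.
Proof. intros H. destruct (Rcase_abs b) as [r|r]; [rewrite Rabs_left in H by lra | rewrite Rabs_right in H by lra]; lra. Qed.

Definition phi (b y : R) : R := b / (b + y).
Definition sb (b : R) : R := sqrt (b ^ 2 - 1).
Definition G (b th : R) : R := 2 * b / sb b * atan ((b * (sin (th / 2) / cos (th / 2)) + 1) / sb b).

Lemma sb_facts b : 1 < Rabs b -> 0 < sb b /\ sb b * sb b = b * b - 1.
Proof.
  intros Hb. assert (1 < b * b).
  { destruct (Rcase_abs b); [rewrite Rabs_left in Hb | rewrite Rabs_right in Hb]; nra. }
  unfold sb. split.
  - apply sqrt_lt_R0. nra.
  - rewrite sqrt_sqrt; nra.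
Qed.

Lemma G_alg (b s c sn : R) : s * s = b * b - 1 -> sn * sn + c * c = 1 -> 0 < s -> c <> 0 -> b <> 0 ->
  b + 2 * sn * c <> 0 ->
  2 * b / s * ((b * (/2 * c * /c + sn * (-( /2 * - sn) * /(c*c))) * /s) * /(1 + ((b*(sn/c)+1)/s)^2))
  = b / (b + 2 * sn * c).
Proof.
  intros Hs Hsc Hs0 Hc Hb Hd.
  replace (/2 * c * /c + sn * (-( /2 * - sn) * /(c*c))) with ((c*c + sn*sn)/(2*c*c)) by (field; auto).
  replace (c*c + sn*sn) with 1 by lra.
  replace (1 + ((b*(sn/c)+1)/s)^2) with ((s*s*(c*c) + (b*sn + c)^2)/(s*s*(c*c))) by (field; split; lra).
  rewrite Hs.
  assert (E : b*b*(sn*sn+c*c) = b*b*1) by (rewrite Hsc; ring).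
  replace ((b * b - 1) * (c * c) + (b * sn + c) ^ 2) with (b * (b + 2 * sn * c)) by nra.
  rewrite <- Hs. field. repeat split; lra.
Qed.

Lemma G_deriv b t : 1 < Rabs b -> - PI < t < PI -> derivable_pt_lim (G b) t (phi b (sin t)).
Proof.
  intros Hb Ht. destruct (sb_facts b Hb) as [Hs0 Hs].
  assert (Hc : 0 < cos (t/2)) by (apply cos_gt_0; lra).
  assert (Hb0 : b <> 0) by (intro; subst; rewrite Rabs_R0 in Hb; lra).
  assert (Hsin : b + sin t <> 0).
  { pose proof (SIN_bound t). destruct (Rcase_abs b); [rewrite Rabs_left in Hb | rewrite Rabs_right in Hb]; lra. }
  set (h := fun x => (b * (sin (x / 2) / cos (x / 2)) + 1) / sb b).
  assert (Hh : is_derive h t ((b * (/2 * cos (t * /2) * /cos (t * /2) + sin (t * /2) * (-( /2 * - sin (t * /2)) * /(cos (t * /2) * cos (t * /2)))) * /sb b))).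
  { unfold h. auto_derive. unfold Rdiv in Hc; lra. ring. }
  assert (Ha : is_derive atan (h t) (/ (1 + (h t)^2))) by (apply is_derive_Reals, derivable_pt_lim_atan).
  pose proof (is_derive_comp _ _ _ _ _ Ha Hh) as Hcomp.
  apply is_derive_Reals in Hcomp.
  pose proof (derivable_pt_lim_scal _ (2 * b / sb b) _ _ Hcomp) as Hsc.
  unfold scal in Hsc. simpl in Hsc. unfold mult in Hsc. simpl in Hsc.
  replace (phi b (sin t)) with (2 * b / sb b * ((b * (/2 * cos (t * /2) * /cos (t * /2) + sin (t * /2) * (-( /2 * - sin (t * /2)) * /(cos (t * /2) * cos (t * /2)))) * /sb b) * / (1 + (h t)^2))).
  - exact Hsc.
  - unfold h, phi. change (t * / 2) with (t / 2).
    replace (sin t) with (2 * sin (t/2) * cos (t/2)).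
    + apply G_alg; auto; try lra.
      * pose proof (sin2_cos2 (t/2)). unfold Rsqr in H. lra.
      * rewrite <- sin_2a. replace (2 * (t/2)) with t by field. auto.
    + rewrite <- sin_2a. f_equal. field.
Qed.

Lemma G_end b : 1 < Rabs b ->
  G b (PI/2) - G b 0 = 2 * b / (b + 1) * sqrt ((b + 1) / (b - 1)) * atan (sqrt ((b - 1) / (b + 1))).
Proof.
  intros Hb. destruct (sb_facts b Hb) as [Hs0 Hs].
  set (s := sb b) in *.
  unfold G. fold s.
  replace (PI/2/2) with (PI/4) by field.
  rewrite sin_PI4, cos_PI4. replace (0/2) with 0 by field. rewrite sin_0, cos_0.
  assert (Hsq : 0 < sqrt 2) by (apply sqrt_lt_R0; lra).
  replace (1 / sqrt 2 / (1 / sqrt 2)) with 1 by (field; lra).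
  replace (0/1) with 0 by field.
  replace ((b * 1 + 1) / s) with ((b+1)/s) by (f_equal; ring).
  replace ((b * 0 + 1) / s) with (1/s) by (f_equal; ring).
  assert (Hbb : 1 < b * b).
  { destruct (Rcase_abs b); [rewrite Rabs_left in Hb | rewrite Rabs_right in Hb]; nra. }
  assert (Hb1 : b - 1 <> 0) by (intro; nra).
  assert (Hb2 : b + 1 <> 0) by (intro; nra).
  rewrite <- Rmult_minus_distr_l.
  assert (Heq : 1 + (b+1)/s * (1/s) = b / (b - 1)).
  { replace (1 + (b+1)/s * (1/s)) with (1 + (b+1)/(s*s)) by (field; lra).
    rewrite Hs. field; split; [lra|]; intro; nra. }
  assert (Hcond : 0 < 1 + (b+1)/s * (1/s)).
  { rewrite Heq.
    destruct (b_cases b Hb).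
    - replace (b/(b-1)) with ((-b)/(-(b-1))) by (field; lra). apply Rdiv_lt_0_compat; lra.
    - apply Rdiv_lt_0_compat; lra. }
  rewrite (atan_sub _ _ Hcond).
  replace (((b + 1) / s - 1 / s) / (1 + (b + 1) / s * (1 / s))) with ((b-1)/s).
  2:{ rewrite Heq. field. repeat split; try lra. intro; subst; lra. }
  destruct (b_cases b Hb) as [Hn|Hp].
  - rewrite (sqrt_lem_1 ((b+1)/(b-1)) (-(b+1)/s)).
    rewrite (sqrt_lem_1 ((b-1)/(b+1)) (-(b-1)/s)).
    + replace (-(b-1)/s) with (-((b-1)/s)) by (field; lra). rewrite atan_opp. field. split; lra.
    + replace ((b-1)/(b+1)) with ((-(b-1))/(-(b+1))) by (field; lra). left; apply Rdiv_lt_0_compat; lra.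
    + left; apply Rdiv_lt_0_compat; lra.
    + replace (-(b-1)/s * (-(b-1)/s)) with ((b-1)*(b-1)/(s*s)) by (field; lra). rewrite Hs. field. split; lra.
    + replace ((b+1)/(b-1)) with ((-(b+1))/(-(b-1))) by (field; lra). left; apply Rdiv_lt_0_compat; lra.
    + left; apply Rdiv_lt_0_compat; lra.
    + replace (-(b+1)/s * (-(b+1)/s)) with ((b+1)*(b+1)/(s*s)) by (field; lra). rewrite Hs. field. split; lra.
  - rewrite (sqrt_lem_1 ((b+1)/(b-1)) ((b+1)/s)).
    rewrite (sqrt_lem_1 ((b-1)/(b+1)) ((b-1)/s)).
    + field. split; lra.
    + left; apply Rdiv_lt_0_compat; lra.
    + left; apply Rdiv_lt_0_compat; lra.
    + replace ((b-1)/s * ((b-1)/s)) with ((b-1)*(b-1)/(s*s)) by (field; lra). rewrite Hs. field. split; lra.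
    + left; apply Rdiv_lt_0_compat; lra.
    + left; apply Rdiv_lt_0_compat; lra.
    + replace ((b+1)/s * ((b+1)/s)) with ((b+1)*(b+1)/(s*s)) by (field; lra). rewrite Hs. field. split; lra.
Qed.


Lemma Rabs_div a c : Rabs (a / c) = Rabs a / Rabs c.
Proof. unfold Rdiv; rewrite Rabs_mult, Rabs_inv; reflexivity. Qed.

Lemma sumk_abs_le (f g : nat -> R) N : (forall k, (k < N)%nat -> Rabs (f k) <= g k) ->
  Rabs (sumk f N) <= sumk g N.
Proof.
  induction N; intros H; simpl.
  - rewrite Rabs_R0; lra.
  - eapply Rle_trans; [apply Rabs_triang|].
    specialize (IHN (fun k Hk => H k ltac:(lia))). specialize (H N ltac:(lia)). lra.
Qed.

Lemma sumk_minus (f g : nat -> R) N : sumk f N - sumk g N = sumk (fun k => f k - g k) N.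
Proof. induction N; simpl; lra. Qed.

Lemma sumk_scal (f : nat -> R) e N : sumk (fun k => e * f k) N = e * sumk f N.
Proof. induction N; simpl; [ring|]. rewrite IHN; ring. Qed.

Lemma sumk_tele (g : nat -> R) N : sumk (fun k => g (S k) - g k) N = g N - g 0%nat.
Proof. induction N; simpl; [ring|]. rewrite IHN; ring. Qed.

Lemma tele (a g v : nat -> R) e N :
  (forall k, (k < N)%nat -> Rabs (a k - (g (S k) - g k)) <= e * v k) ->
  Rabs (sumk a N - (g N - g 0%nat)) <= e * sumk v N.
Proof.
  intros H. rewrite <- sumk_tele, sumk_minus, <- sumk_scal. apply sumk_abs_le. auto.
Qed.

Lemma phi_lip b y z : 1 < Rabs b -> -1 <= y <= 1 -> -1 <= z <= 1 ->
  Rabs (phi b y - phi b z) <= Rabs b / (Rabs b - 1)^2 * Rabs (y - z).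
Proof.
  intros Hb Hy Hz. unfold phi.
  destruct (b_cases b Hb) as [Hn|Hp].
  - rewrite (Rabs_left b) by lra.
    assert (b + y < 0) by lra. assert (b + z < 0) by lra.
    replace (b/(b+y) - b/(b+z)) with (-b * (y - z) / ((b+y)*(b+z))) by (field; lra).
    rewrite Rabs_div, Rabs_mult, (Rabs_right (-b)), (Rabs_right ((b+y)*(b+z))) by nra.
    apply div_le; [nra|].
    replace (- b / (- b - 1) ^ 2 * Rabs (y - z) * ((b + y) * (b + z)))
      with (- b * Rabs (y - z) * (((b + y) * (b + z)) / (- b - 1) ^ 2)) by (field; lra).
    pose proof (Rabs_pos (y - z)).
    rewrite <- (Rmult_1_r (- b * Rabs (y - z))) at 1.
    apply Rmult_le_compat_l; [nra|]. apply le_div; [nra|]. nra.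
  - rewrite (Rabs_right b) by lra.
    assert (0 < b + y) by lra. assert (0 < b + z) by lra.
    replace (b/(b+y) - b/(b+z)) with (b * (z - y) / ((b+y)*(b+z))) by (field; lra).
    rewrite Rabs_div, Rabs_mult, (Rabs_right b), (Rabs_right ((b+y)*(b+z))) by nra.
    rewrite <- Rabs_Ropp. replace (- (z - y)) with (y - z) by ring.
    apply div_le; [nra|].
    replace (b / (b - 1) ^ 2 * Rabs (y - z) * ((b + y) * (b + z)))
      with (b * Rabs (y - z) * (((b + y) * (b + z)) / (b - 1) ^ 2)) by (field; lra).
    pose proof (Rabs_pos (y - z)).
    rewrite <- (Rmult_1_r (b * Rabs (y - z))) at 1.
    apply Rmult_le_compat_l; [nra|]. apply le_div; [nra|]. nra.
Qed.

Lemma phi_bound b y : 1 < Rabs b -> -1 <= y <= 1 -> Rabs (phi b y) <= Rabs b / (Rabs b - 1).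
Proof.
  intros Hb Hy. unfold phi. destruct (b_cases b Hb) as [Hn|Hp].
  - rewrite (Rabs_left b) by lra. rewrite Rabs_div, (Rabs_left b), (Rabs_left (b+y)) by lra.
    apply Rmult_le_compat_l; [lra|]. apply Rinv_le_contravar; lra.
  - rewrite (Rabs_right b) by lra. rewrite Rabs_div, (Rabs_right b), (Rabs_right (b+y)) by lra.
    apply Rmult_le_compat_l; [lra|]. apply Rinv_le_contravar; lra.
Qed.


Lemma th_last n : (2 <= n)%nat -> PI/2 - sqrt (3 / INR n) <= th n (n-1).
Proof.
  intros Hn. pose proof (INR2 n Hn).
  pose proof (th_range n (n-1) ltac:(lia) ltac:(lia)) as Hr.
  set (t := PI/2 - th n (n-1)).
  assert (Ht : 0 <= t <= PI/2) by (unfold t; lra).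
  assert (Hc : cos t = 1 - / INR n).
  { unfold t. rewrite cos_shift, sin_th by lia. unfold xx. rewrite minus_INR by lia. simpl. field. lra. }
  pose proof PI_4.
  destruct (cos_bound t 0 ltac:(lra) ltac:(lra)) as [_ Hcb].
  replace (cos_approx t (2 * (0 + 1))) with (1 - t^2/2 + t^4/24) in Hcb
    by (unfold cos_approx, cos_term; simpl; field).
  assert (t^2 <= 4) by nra.
  assert (t^4 <= 4 * t^2) by (replace (t^4) with (t^2 * t^2) by ring; apply Rmult_le_compat_r; nra).
  assert (t^2 <= 3 / INR n).
  { rewrite Hc in Hcb. apply le_div; [lra|].
    assert (t^2 / 3 <= / INR n) by lra.
    apply Rmult_le_reg_r with (/ 3); [lra|].
    replace (t ^ 2 * INR n * / 3) with (t^2/3 * INR n) by (unfold Rdiv; ring).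
    replace (3 * / 3) with 1 by field.
    apply Rmult_le_reg_r with (/ INR n). apply Rinv_0_lt_compat; lra.
    rewrite Rmult_assoc, Rinv_r, Rmult_1_r, Rmult_1_l by lra. lra. }
  assert (t <= sqrt (3 / INR n)).
  { rewrite <- (sqrt_pow2 t) by lra. apply sqrt_le_1_alt. lra. }
  unfold t in *. lra.
Qed.

Definition en (n : nat) : R := sqrt (4 / INR n).

Lemma u_le_en n k : (2 <= n)%nat -> (k < n)%nat -> u n k <= en n.
Proof.
  intros Hn Hk. pose proof (u_pos n k Hn). unfold en.
  rewrite <- (sqrt_pow2 (u n k)) by lra. apply sqrt_le_1_alt. apply u_sq_small; auto.
Qed.

Lemma en_small n : (16 <= n)%nat -> en n <= /2.
Proof.
  intros Hn. unfold en.
  assert (16 <= INR n) by (replace 16 with (INR 16) by (simpl; lra); apply le_INR; auto).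
  replace (/2) with (sqrt (/4)).
  - apply sqrt_le_1_alt. apply div_le; lra.
  - apply sqrt_lem_1; lra.
Qed.

Lemma U_mono n k m : (2 <= n)%nat -> (k <= m)%nat -> U n k <= U n m.
Proof.
  intros Hn. induction 1; [lra|]. unfold U in *; simpl. pose proof (u_pos n m Hn). lra.
Qed.

Lemma U_S n k : U n (S k) = U n k + u n k.
Proof. reflexivity. Qed.

Lemma U_n_le n : (16 <= n)%nat -> U n n <= PI/2 + /2.
Proof.
  intros Hn. pose proof (U_last n ltac:(lia)). pose proof (u_le_en n (n-1) ltac:(lia) ltac:(lia)).
  pose proof (en_small n Hn). lra.
Qed.

Lemma main_tele b n : 1 < Rabs b -> (16 <= n)%nat ->
  Rabs (sumk (fun k => u n k * phi b (xx n k)) n - (G b (U n n) - G b 0))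
  <= Rabs b / (Rabs b - 1)^2 * (/ INR n + 2 * (1 - cn n) + en n) * U n n.
Proof.
  intros Hb Hn.
  replace (G b 0) with (G b (U n 0)) by reflexivity.
  apply (tele (fun k => u n k * phi b (xx n k)) (fun k => G b (U n k)) (u n)).
  intros k Hk. rewrite U_S.
  pose proof (u_pos n k ltac:(lia)) as Hu.
  pose proof (U_nonneg n k ltac:(lia)) as HU0.
  pose proof (U_mono n (S k) n ltac:(lia) Hk) as HUm. rewrite U_S in HUm.
  pose proof (U_n_le n Hn). pose proof PI2_1.
  destruct (MVT_cor2 (G b) (fun c => phi b (sin c)) (U n k) (U n k + u n k) ltac:(lra)
     (fun c Hc => G_deriv b c Hb ltac:(lra))) as [xi [Hxi Hxr]].
  rewrite Hxi. replace (U n k + u n k - U n k) with (u n k) by ring.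
  replace (u n k * phi b (xx n k) - phi b (sin xi) * u n k)
    with (u n k * (phi b (xx n k) - phi b (sin xi))) by ring.
  rewrite Rabs_mult, (Rabs_right (u n k)) by lra.
  pose proof (xx_range n k ltac:(lia) ltac:(lia)).
  pose proof (SIN_bound xi).
  pose proof (phi_lip b (xx n k) (sin xi) Hb ltac:(lra) ltac:(lra)) as Hl.
  pose proof (sinU n k ltac:(lia) ltac:(lia)) as Hs.
  pose proof (sin_lip xi (U n k)) as Hs2.
  pose proof (u_le_en n k ltac:(lia) Hk) as He.
  assert (Habs : Rabs (xx n k - sin xi) <= / INR n + 2 * (1 - cn n) + en n).
  { replace (xx n k - sin xi) with (-(sin (U n k) - xx n k) - (sin xi - sin (U n k))) by ring.
    eapply Rle_trans; [apply Rabs_triang|]. rewrite Rabs_Ropp, Rabs_Ropp.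
    rewrite (Rabs_right (xi - U n k)) in Hs2 by lra. lra. }
  assert (0 < Rabs b / (Rabs b - 1)^2).
  { apply Rdiv_lt_0_compat; [lra|]. nra. }
  rewrite (Rmult_comm _ (u n k)).
  apply Rmult_le_compat_l; [lra|].
  eapply Rle_trans; [exact Hl|]. apply Rmult_le_compat_l; lra.
Qed.


Lemma phi_diff b be x : 1 < Rabs b -> Rabs (be - b) <= (Rabs b - 1)/2 -> 0 <= x <= 1 ->
  Rabs (phi be x - phi b x) <= 2 / (Rabs b - 1)^2 * Rabs (be - b).
Proof.
  intros Hb Hbe Hx. unfold phi. pose proof (Rabs_pos (be - b)).
  assert (Hbe2 : -((Rabs b-1)/2) <= be - b <= (Rabs b - 1)/2).
  { pose proof (Rle_abs (be-b)). pose proof (Rle_abs (-(be-b))). rewrite Rabs_Ropp in H1. lra. }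
  clear Hbe.
  destruct (b_cases b Hb) as [Hn|Hp].
  - rewrite (Rabs_left b) in Hbe2 |- * by lra.
    assert (be + x < 0) by lra. assert (b + x < 0) by lra.
    replace (be/(be+x) - b/(b+x)) with (x * (be - b) / ((be+x)*(b+x))) by (field; lra).
    rewrite Rabs_div, Rabs_mult, (Rabs_right x), (Rabs_right ((be+x)*(b+x))) by nra.
    apply div_le; [nra|].
    assert ((- b - 1)^2 <= 2 * ((be + x) * (b + x))) by nra.
    assert (x * Rabs (be - b) <= Rabs (be - b)) by nra.
    apply Rle_trans with (Rabs (be - b)); auto.
    replace (2 / (- b - 1) ^ 2 * Rabs (be - b) * ((be + x) * (b + x)))
      with (Rabs (be - b) * (2 * ((be + x) * (b + x)) / (- b - 1) ^ 2)) by (field; lra).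
    rewrite <- (Rmult_1_r (Rabs (be - b))) at 1.
    apply Rmult_le_compat_l; auto. apply le_div; nra.
  - rewrite (Rabs_right b) in Hbe2 |- * by lra.
    assert (0 < be + x) by lra. assert (0 < b + x) by lra.
    replace (be/(be+x) - b/(b+x)) with (x * (be - b) / ((be+x)*(b+x))) by (field; lra).
    rewrite Rabs_div, Rabs_mult, (Rabs_right x), (Rabs_right ((be+x)*(b+x))) by nra.
    apply div_le; [nra|].
    assert ((b - 1)^2 <= 2 * ((be + x) * (b + x))) by nra.
    assert (x * Rabs (be - b) <= Rabs (be - b)) by nra.
    apply Rle_trans with (Rabs (be - b)); auto.
    replace (2 / (b - 1) ^ 2 * Rabs (be - b) * ((be + x) * (b + x)))
      with (Rabs (be - b) * (2 * ((be + x) * (b + x)) / (b - 1) ^ 2)) by (field; lra).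
    rewrite <- (Rmult_1_r (Rabs (be - b))) at 1.
    apply Rmult_le_compat_l; auto. apply le_div; nra.
Qed.

Lemma G_close b x : 1 < Rabs b -> 0 <= x <= PI/2 + /2 ->
  Rabs (G b x - G b (PI/2)) <= Rabs b / (Rabs b - 1) * Rabs (x - PI/2).
Proof.
  intros Hb Hx. pose proof PI2_1. pose proof PI_4.
  assert (Hm : 0 <= Rabs b / (Rabs b - 1)) by (apply Rlt_le, Rdiv_lt_0_compat; lra).
  destruct (Rtotal_order x (PI/2)) as [Hlt|[Heq|Hgt]].
  - destruct (MVT_cor2 (G b) (fun c => phi b (sin c)) x (PI/2) Hlt
      (fun c Hc => G_deriv b c Hb ltac:(lra))) as [xi [Hxi Hxr]].
    rewrite <- Rabs_Ropp, Ropp_minus_distr, Hxi, Rabs_mult.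
    rewrite <- (Rabs_Ropp (x - PI/2)), Ropp_minus_distr.
    apply Rmult_le_compat_r; [apply Rabs_pos|]. apply phi_bound; auto. apply SIN_bound.
  - subst. rewrite !Rminus_diag, Rabs_R0. lra.
  - destruct (MVT_cor2 (G b) (fun c => phi b (sin c)) (PI/2) x Hgt
      (fun c Hc => G_deriv b c Hb ltac:(lra))) as [xi [Hxi Hxr]].
    rewrite Hxi, Rabs_mult.
    apply Rmult_le_compat_r; [apply Rabs_pos|]. apply phi_bound; auto. apply SIN_bound.
Qed.

Lemma Un_close n : (16 <= n)%nat -> Rabs (U n n - PI/2) <= 3 * en n.
Proof.
  intros Hn.
  assert (H16 : 16 <= INR n) by (replace 16 with (INR 16) by (simpl; lra); apply le_INR; auto).
  pose proof (U_last n ltac:(lia)). pose proof (u_le_en n (n-1) ltac:(lia) ltac:(lia)).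
  pose proof (U_lower n (n-1) ltac:(lia) ltac:(lia)) as Hl. replace (S (n-1)) with n in Hl by lia.
  pose proof (th_last n ltac:(lia)).
  pose proof (th_range n (n-1) ltac:(lia) ltac:(lia)).
  destruct (cn_facts n ltac:(lia)) as [Hc1 [Hc2 Hc3]].
  pose proof PI_4.
  assert (sqrt (3 / INR n) <= en n) by (apply sqrt_le_1_alt; apply Rmult_le_compat_r; [apply Rlt_le, Rinv_0_lt_compat|]; lra).
  assert (/ INR n <= en n).
  { unfold en. rewrite <- (sqrt_pow2 (/ INR n)) by (apply Rlt_le, Rinv_0_lt_compat; lra).
    apply sqrt_le_1_alt. replace ((/ INR n)^2) with (/ INR n * / INR n) by ring.
    unfold Rdiv. rewrite (Rmult_comm 4). apply Rmult_le_compat_l; [apply Rlt_le, Rinv_0_lt_compat; lra|].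
    apply Rle_trans with 1; [|lra]. rewrite <- Rinv_1. apply Rinv_le_contravar; lra. }
  assert (/ (2 * INR n) <= / INR n) by (apply Rinv_le_contravar; lra).
  apply Rabs_le. split; nra.
Qed.


Lemma small_terms n : (16 <= n)%nat -> / INR n <= en n /\ 2 * (1 - cn n) <= en n.
Proof.
  intros Hn.
  assert (H16 : 16 <= INR n) by (replace 16 with (INR 16) by (simpl; lra); apply le_INR; auto).
  destruct (cn_facts n ltac:(lia)) as [Hc1 [Hc2 Hc3]].
  assert (/ INR n <= en n).
  { unfold en. rewrite <- (sqrt_pow2 (/ INR n)) by (apply Rlt_le, Rinv_0_lt_compat; lra).
    apply sqrt_le_1_alt. replace ((/ INR n)^2) with (/ INR n * / INR n) by ring.
    unfold Rdiv. rewrite (Rmult_comm 4). apply Rmult_le_compat_l; [apply Rlt_le, Rinv_0_lt_compat; lra|].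
    apply Rle_trans with 1; [|lra]. rewrite <- Rinv_1. apply Rinv_le_contravar; lra. }
  assert (/ (2 * INR n) <= / INR n) by (apply Rinv_le_contravar; lra).
  assert (/ (2 * INR n) = / 2 * / INR n) by (field; lra).
  split; nra.
Qed.

Lemma sumk_ext (f g : nat -> R) N : (forall k, (k < N)%nat -> f k = g k) -> sumk f N = sumk g N.
Proof.
  induction N; intros H; simpl; auto. rewrite IHN by (intros; apply H; lia). rewrite H by lia. auto.
Qed.

Lemma S_eq (n : nat) (c : R) : (16 <= n)%nat ->
  (forall j, (j < n)%nat -> c + INR j <> 0) ->
  / INR n * F43_trunc 1 (INR n + /2) (1 - INR n) c (INR n + 1) (3/2 - INR n) (c + 1) 1 n
  = sumk (fun k => u n k * phi (c / INR n) (xx n k)) n.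
Proof.
  intros Hn Hc.
  assert (H16 : 16 <= INR n) by (replace 16 with (INR 16) by (simpl; lra); apply le_INR; auto).
  unfold F43_trunc. rewrite fold_sumk. change (sumk (fun k => T n c k) n = sumk (fun k => u n k * phi (c / INR n) (xx n k)) n) || idtac.
  rewrite <- sumk_scal. apply sumk_ext. intros k Hk.
  pose proof (T_A c k (n - k - 1) (fun j Hj => Hc j ltac:(lia))) as HT.
  replace (n - k - 1 + k + 1)%nat with n in HT by lia.
  unfold T in HT. rewrite HT.
  unfold u, phi, xx.
  assert (c + INR k <> 0) by (apply Hc; lia).
  field. split; [|lra].
  intro E. apply H. replace (c + INR k) with (INR n * (c / INR n + INR k / INR n)) by (field; lra).
  rewrite E. ring.
Qed.

Lemma key b n (c : R) : 1 < Rabs b -> (16 <= n)%nat ->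
  Rabs (c / INR n - b) <= (Rabs b - 1) / 2 ->
  Rabs (/ INR n * F43_trunc 1 (INR n + /2) (1 - INR n) c (INR n + 1) (3/2 - INR n) (c + 1) 1 n
        - (G b (PI/2) - G b 0))
  <= 6 / (Rabs b - 1)^2 * Rabs (c / INR n - b)
     + (9 * (Rabs b / (Rabs b - 1)^2) + 3 * (Rabs b / (Rabs b - 1))) * en n.
Proof.
  intros Hb Hn Hbe.
  assert (H16 : 16 <= INR n) by (replace 16 with (INR 16) by (simpl; lra); apply le_INR; auto).
  set (be := c / INR n) in *.
  assert (Hbe2 : -((Rabs b-1)/2) <= be - b <= (Rabs b - 1)/2).
  { pose proof (Rle_abs (be-b)). pose proof (Rle_abs (-(be-b))). rewrite Rabs_Ropp in H0. lra. }
  rewrite S_eq; auto.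
  2:{ intros j Hj E.
      assert (Hx : 0 <= INR j / INR n <= 1) by (apply (xx_range n j); lia).
      assert (c + INR j = INR n * (be + INR j / INR n)) by (unfold be; field; lra).
      rewrite H in E. apply Rmult_integral in E. destruct E as [E|E]; [lra|].
      destruct (b_cases b Hb); [rewrite Rabs_left in Hbe2 | rewrite Rabs_right in Hbe2]; lra. }
  fold be.
  set (Lb := Rabs b / (Rabs b - 1)^2). set (M := Rabs b / (Rabs b - 1)).
  pose proof (main_tele b n Hb Hn) as Ht. fold Lb in Ht.
  pose proof (G_close b (U n n) Hb (conj (U_nonneg n n ltac:(lia)) (U_n_le n Hn))) as Hg. fold M in Hg.
  pose proof (Un_close n Hn) as Hu.
  pose proof (small_terms n Hn) as [Hs1 Hs2].
  pose proof (U_n_le n Hn). pose proof (U_nonneg n n ltac:(lia)). pose proof PI_4.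
  assert (Hsd : Rabs (sumk (fun k => u n k * phi be (xx n k)) n - sumk (fun k => u n k * phi b (xx n k)) n)
               <= 2 / (Rabs b - 1)^2 * Rabs (be - b) * U n n).
  { rewrite sumk_minus. unfold U. rewrite <- sumk_scal. apply sumk_abs_le. intros k Hk.
    replace (u n k * phi be (xx n k) - u n k * phi b (xx n k)) with (u n k * (phi be (xx n k) - phi b (xx n k))) by ring.
    rewrite Rabs_mult, Rabs_right by (pose proof (u_pos n k ltac:(lia)); lra).
    rewrite Rmult_comm. apply Rmult_le_compat_r; [pose proof (u_pos n k ltac:(lia)); lra|].
    apply phi_diff; auto. apply xx_range; lia. }
  assert (HLb : 0 <= Lb) by (unfold Lb; apply Rlt_le, Rdiv_lt_0_compat; [lra| nra]).
  assert (HM : 0 <= M) by (unfold M; apply Rlt_le, Rdiv_lt_0_compat; lra).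
  assert (Hd : 0 <= 2 / (Rabs b - 1)^2 * Rabs (be - b)).
  { apply Rmult_le_pos; [apply Rlt_le, Rdiv_lt_0_compat; nra| apply Rabs_pos]. }
  set (S1 := sumk (fun k => u n k * phi be (xx n k)) n) in *.
  set (S2 := sumk (fun k => u n k * phi b (xx n k)) n) in *.
  replace (S1 - (G b (PI/2) - G b 0)) with ((S1 - S2) + (S2 - (G b (U n n) - G b 0)) + (G b (U n n) - G b (PI/2))) by ring.
  eapply Rle_trans; [apply Rabs_triang|].
  eapply Rle_trans; [apply Rplus_le_compat_r, Rabs_triang|].
  assert (E1 : 2 / (Rabs b - 1)^2 * Rabs (be - b) * U n n <= 6 / (Rabs b - 1)^2 * Rabs (be - b)).
  { replace (6 / (Rabs b - 1)^2 * Rabs (be - b)) with (2 / (Rabs b - 1)^2 * Rabs (be - b) * 3) by (field; lra).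
    apply Rmult_le_compat_l; lra. }
  assert (E2 : Lb * (/ INR n + 2 * (1 - cn n) + en n) * U n n <= 9 * Lb * en n).
  { apply Rle_trans with (Lb * (3 * en n) * 3).
    - apply Rmult_le_compat; try lra.
      + apply Rmult_le_pos; auto. pose proof (cn_facts n ltac:(lia)). pose proof (Rinv_0_lt_compat (INR n) ltac:(lra)).
        unfold en. pose proof (sqrt_pos (4 / INR n)). nra.
      + apply Rmult_le_compat_l; lra.
    - lra. }
  assert (E3 : M * Rabs (U n n - PI/2) <= 3 * M * en n).
  { apply Rle_trans with (M * (3 * en n)); [apply Rmult_le_compat_l; lra | lra]. }
  replace ((9 * Lb + 3 * M) * en n) with (9 * Lb * en n + 3 * M * en n) by ring.
  lra.
Qed.


Theorem lemma18 (b : R) (r : nat) (bs : nat -> R)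
  (hb : 1 < Rabs b) (hbs : Un_cv bs b) :
  Un_cv
    (fun n : nat =>
       / INR n *
       F43_trunc 1 (INR n + /2) (1 - INR n) (bs n * INR n + INR r)
                 (INR n + 1) (3/2 - INR n) (bs n * INR n + INR r + 1)
                 1 n)
    (2 * b / (b + 1) * sqrt ((b + 1) / (b - 1))
       * atan (sqrt ((b - 1) / (b + 1)))).
Proof.
  rewrite <- (G_end b hb).
  intros eps Heps.
  set (d := Rabs b - 1).
  assert (Hd : 0 < d) by (unfold d; lra).
  set (K := 9 * (Rabs b / d^2) + 3 * (Rabs b / d)).
  assert (HK : 0 < K).
  { unfold K. assert (0 < Rabs b / d^2) by (apply Rdiv_lt_0_compat; [lra|apply pow_lt; lra]).
    assert (0 < Rabs b / d) by (apply Rdiv_lt_0_compat; lra). lra. }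
  set (eta := Rmin (d/4) (eps * d^2 / 24)).
  assert (Heta : 0 < eta).
  { unfold eta. apply Rmin_glb_lt; [lra|]. apply Rdiv_lt_0_compat; [|lra]. apply Rmult_lt_0_compat; [lra| apply pow_lt; lra]. }
  destruct (hbs eta Heta) as [N1 HN1].
  set (q := eps / (2 * K)).
  assert (Hq : 0 < q) by (unfold q; apply Rdiv_lt_0_compat; lra).
  destruct (INR_unbounded (4 / q^2)) as [N2 HN2].
  destruct (INR_unbounded (INR r / eta)) as [N3 HN3].
  exists (N1 + N2 + N3 + 16)%nat. intros n Hn.
  unfold Rdist.
  assert (H16 : (16 <= n)%nat) by lia.
  assert (Hn16 : 16 <= INR n) by (replace 16 with (INR 16) by (simpl; lra); apply le_INR; auto).
  assert (HnN2 : INR N2 <= INR n) by (apply le_INR; lia).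
  assert (HnN3 : INR N3 <= INR n) by (apply le_INR; lia).
  specialize (HN1 n ltac:(lia)). unfold Rdist in HN1.
  set (c := bs n * INR n + INR r).
  assert (Hcn : c / INR n = bs n + INR r / INR n) by (unfold c; field; lra).
  assert (Hr : 0 <= INR r / INR n < eta).
  { pose proof (pos_INR r). split.
    - apply Rmult_le_pos; [lra| apply Rlt_le, Rinv_0_lt_compat; lra].
    - assert (INR r < INR N3 * eta).
      { apply Rmult_lt_reg_r with (/ eta). apply Rinv_0_lt_compat; lra.
        rewrite Rmult_assoc, Rinv_r, Rmult_1_r by lra. exact HN3. }
      apply Rmult_lt_reg_r with (INR n); [lra|].
      unfold Rdiv. rewrite Rmult_assoc, Rinv_l, Rmult_1_r by lra. nra. }
  assert (Heta1 : eta <= d/4) by apply Rmin_l.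
  assert (Heta2 : eta <= eps * d^2 / 24) by apply Rmin_r.
  assert (Hbe : Rabs (c / INR n - b) < 2 * eta).
  { rewrite Hcn. replace (bs n + INR r / INR n - b) with ((bs n - b) + INR r / INR n) by ring.
    eapply Rle_lt_trans; [apply Rabs_triang|]. rewrite (Rabs_right (INR r / INR n)) by lra. lra. }
  assert (Hen : en n < q).
  { unfold en. rewrite <- (sqrt_pow2 q) by lra. apply sqrt_lt_1_alt. split.
    - apply Rlt_le, Rdiv_lt_0_compat; lra.
    - assert (4 < q^2 * INR n).
      { apply Rmult_lt_reg_r with (/ q^2). apply Rinv_0_lt_compat, pow_lt; lra.
        replace (q^2 * INR n * / q^2) with (INR n) by (field; lra). unfold Rdiv in HN2. lra. }
      apply Rmult_lt_reg_r with (INR n); [lra|].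
      unfold Rdiv. rewrite Rmult_assoc, Rinv_l, Rmult_1_r by lra. lra. }
  pose proof (key b n c hb H16 ltac:(fold d; lra)) as Hk.
  fold d in Hk. fold K in Hk.
  eapply Rle_lt_trans; [exact Hk|].
  assert (6 / d^2 * Rabs (c / INR n - b) <= 6 / d^2 * (2 * eta)).
  { apply Rmult_le_compat_l; [apply Rlt_le, Rdiv_lt_0_compat; [lra| apply pow_lt; lra]| lra]. }
  assert (6 / d^2 * (2 * eta) <= eps / 2).
  { replace (eps / 2) with (6 / d^2 * (2 * (eps * d^2 / 24))) by (field; lra).
    apply Rmult_le_compat_l; [apply Rlt_le, Rdiv_lt_0_compat; [lra| apply pow_lt; lra]| lra]. }
  assert (K * en n < eps / 2).
  { replace (eps / 2) with (K * q) by (unfold q; field; lra). apply Rmult_lt_compat_l; lra. }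
  lra.
Qed.
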